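(* Let $(X,\mathcal{A})$ be a measurable space, $f\in\mathcal{F}_{[0,1]}^{(X,\mathcal{A})}$, and $m$ a monotone measure on $(X,\mathcal{A})$ with $m(X)=1$. Then for all $0<r\le s<\infty$, \[ \big(\mathbf{Su}(m,f^{s})\big)^{1/s}\ \ge\ \big(\mathbf{Su}(m,f^{r})\big)^{1/r}. \]
   Context: A monotone measure on $(X,\mathcal{A})$ is $m:\mathcal{A}\to[0,\infty]$ with $m(\emptyset)=0$, $m(X)>0$, $m(A)\le m(B)$ for $A\subseteq B$. $\mathcal{F}_{[0,1]}^{(X,\mathcal{A})}$ is the set of $\mathcal{A}$-measurable $f:X\to[0,1]$. The Sugeno integral is $\mathbf{Su}(m,f)=\sup\{\min(t,m(\{f\ge t\})) : t\in(0,\infty]\}$. *)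

(* Defs.v *)
From HB Require Import structures.
From mathcomp Require Import all_boot all_order all_algebra.
From mathcomp Require Import all_classical all_reals all_analysis.
Set Implicit Arguments. Unset Strict Implicit. Unset Printing Implicit Defensive.
Import Order.TTheory GRing.Theory Num.Theory.
Local Open Scope classical_set_scope.
Local Open Scope ring_scope.

(* Monotone measure on (T, measurable): m : A -> [0, +oo] (values outside the
   sigma-algebra are irrelevant), m set0 = 0, m setT > 0, monotone on A. *)
Definition monotone_measure (d : measure_display) (T : measurableType d)
  (R : realType) (m : set T -> \bar R) : Prop :=
  [/\ m set0 = 0%E,
      (0 < m setT)%E,
      (forall A, measurable A -> (0 <= m A)%E) &
      (forall A B, measurable A -> measurable B -> A `<=` B -> (m A <= m B)%E)].

Definition F01 (d : measure_display) (T : measurableType d) (R : realType)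
  (f : T -> R) : Prop :=
  measurable_fun setT f /\ (forall x, 0 <= f x <= 1).

Definition sugeno (d : measure_display) (T : measurableType d) (R : realType)
  (m : set T -> \bar R) (f : T -> R) : \bar R :=
  ereal_sup [set Order.min t (m [set x | (t <= (f x)%:E)%E]) | t in
              [set t : \bar R | (0 < t)%E]].

(* Main.v *)
Require Import Defs.
From HB Require Import structures.
From mathcomp Require Import all_boot all_order all_algebra.
From mathcomp Require Import all_classical all_reals all_analysis.
From mathcomp Require Import ring.
Import Order.TTheory GRing.Theory Num.Theory.
Local Open Scope classical_set_scope.
Local Open Scope ring_scope.

Lemma pow_le1 (R : realType) (x p : R) : 0 < p -> 0 <= x <= 1 -> x `^ p <= 1.
Proof.
move=> hp /andP[x0 x1].
have -> : (1:R) = 1 `^ p by rewrite powR1. by apply: ge0_ler_powR => //; rewrite ?nnegrE ?ltW.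
Qed.

Lemma empty_set_lvl (d : measure_display) (T : measurableType d) (R : realType)
  (f : T -> R) (p : R) (t : \bar R) : 0 < p -> (forall x, 0 <= f x <= 1) ->
  (1 < t)%E -> [set x | (t <= (f x `^ p)%:E)%E] = set0.
Proof.
move=> hp hf t1; apply/seteqP; split => x //= h.
have h1 := @pow_le1 _ _ _ hp (hf x).
have : (t <= 1%:E)%E by apply: le_trans h _; rewrite lee_fin.
by rewrite leNgt t1.
Qed.

Lemma sug_bounds (d : measure_display) (T : measurableType d) (R : realType)
  (m : set T -> \bar R) (f : T -> R) (p : R) : 0 < p -> m set0 = 0%E ->
  (forall x, 0 <= f x <= 1) ->
  (0 <= sugeno m (fun x => powR (f x) p) <= 1)%E.
Proof.
move=> hp m0 hf; apply/andP; split.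
  apply: le_ereal_sup_tmp.
  exists (Order.min 2%:E (m [set x | (2%:E <= (f x `^ p)%:E)%E])).
    by exists 2%:E => //=; rewrite lte_fin.
  rewrite empty_set_lvl // ?lte_fin ?m0 //; last by rewrite ltr1n.
  by rewrite le_min lee_fin ler0n lexx.
apply/ereal_supP => y [t t0 <-].
have [t1|t1] := leP t 1%E.
  by rewrite ge_min t1.
by rewrite empty_set_lvl // m0 ge_min lee01 orbT.
Qed.
Theorem corollary3p30 (d : measure_display) (T : measurableType d) (R : realType)
  (m : set T -> \bar R) (f : T -> R)
  (hm : monotone_measure m) (hmX : m setT = 1%E) (hf : F01 f)
  (r s : R) (hr : 0 < r) (hrs : r <= s) :
  (poweR (sugeno m (fun x => powR (f x) s)) (s^-1) >=
   poweR (sugeno m (fun x => powR (f x) r)) (r^-1))%E.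
Proof.
have [m0 _ _ _] := hm; case: hf => _ hf.
have hs : 0 < s by apply: lt_le_trans hrs.
have rn0 : r != 0 by rewrite gt_eqF.
have sn0 : s != 0 by rewrite gt_eqF.
have /andP[a0 a1] := @sug_bounds _ _ _ m f s hs m0 hf.
have /andP[b0 b1] := @sug_bounds _ _ _ m f r hr m0 hf.
set A := sugeno _ _ in a0 a1 *.
set B := sugeno _ _ in b0 b1 *.
have [a EA] : exists a, A = a%:E.
  by move: a0 a1; case: A => [a| |] // _ _; exists a.
have [b EB] : exists b, B = b%:E.
  by move: b0 b1; case: B => [b| |] // _ _; exists b.
rewrite EA lee_fin in a0; rewrite EA in a1.
rewrite EB lee_fin in b0; rewrite EB in b1.
have {}a1 : a <= 1 by rewrite -lee_fin.
have {}b1 : b <= 1 by rewrite -lee_fin.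
rewrite EA EB /= lee_fin leNgt; apply/negP => H.
set c := (a `^ s^-1) `^ r.
have c0 : 0 <= c by apply: powR_ge0.
have cb : c < b.
  have -> : b = (b `^ r^-1) `^ r by rewrite -powRrM mulVf // powRr1.
  by apply: gt0_ltr_powR => //; rewrite nnegrE powR_ge0.
have : (c%:E < B)%E by rewrite EB lte_fin.
move=> /ereal_sup_gt [y [t t0 <-]] {EB}.
rewrite lt_min => /andP[ct cM].
have lvl1 : forall t, (1 < t)%E -> m [set x | (t <= (f x `^ r)%:E)%E] = 0%E.
  by move=> u u1; rewrite empty_set_lvl.
case: t t0 ct cM => [t0| |] // t0pos ct cM; last first.
  by move: cM; rewrite lvl1 ?ltry // ltNge; apply/negP/negPn; exact: c0.
rewrite lte_fin in ct.
have t01 : t0 <= 1.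
  rewrite leNgt; apply/negP => t1.
  by move: cM; rewrite lvl1 ?lte_fin // ltNge; apply/negP/negPn; exact: c0.
set q := r^-1 * s.
have qpos : 0 < q by rewrite mulr_gt0 ?invr_gt0.
have Eset : [set x | ((t0 `^ q)%:E <= (f x `^ s)%:E)%E]
          = [set x | (t0%:E <= (f x `^ r)%:E)%E].
  apply/seteqP; split => x /=; rewrite !lee_fin.
    move=> h; rewrite leNgt; apply/negP => h2.
    have : (f x `^ r) `^ q < t0 `^ q.
      by apply: gt0_ltr_powR => //; rewrite nnegrE ?powR_ge0 ?ltW // (le_lt_trans c0 ct).
    by rewrite -powRrM /q mulrA mulfV // mul1r ltNge h.
  move=> h; have -> : f x `^ s = (f x `^ r) `^ q.
    by rewrite -powRrM /q mulrA mulfV // mul1r.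
  by apply: ge0_ler_powR => //; rewrite ?nnegrE ?powR_ge0 ?ltW // (le_lt_trans c0 ct).
have Hle : (Order.min (t0 `^ q)%:E (m [set x | ((t0 `^ q)%:E <= (f x `^ s)%:E)%E])
            <= A)%E.
  apply: ereal_sup_ubound; exists (t0 `^ q)%:E => //.
  by rewrite /= lte_fin powR_gt0 // (le_lt_trans c0 ct).
rewrite EA Eset in Hle.
have aq : a < t0 `^ q.
  have -> : a = c `^ q.
    rewrite /c -!powRrM.
    have -> : s^-1 * (r * q) = 1 by rewrite /q; field; apply/andP.
    by rewrite powRr1.
  by apply: gt0_ltr_powR => //; rewrite nnegrE ?powR_ge0 // ltW // (le_lt_trans c0 ct).
have ac : a <= c.
  have [->|a0'] := eqVneq a 0; first exact: c0.
  rewrite /c -powRrM; apply: ger1_powR.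
    by rewrite a1 andbT lt_neqAle eq_sym a0' a0.
  by rewrite ler_pdivrMl // mulr1.
move: Hle; rewrite ge_min !leNgt lte_fin aq /=.
by rewrite (le_lt_trans _ cM) // lee_fin.
Qed.
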